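(* Let $S\subseteq\mathbb{R}^{n-1}$ and let $P\in\mathbb{R}[\mathbf{x};x_n]$ have degree $d_n$ in $x_n$, $P=\sum_{k=0}^{d_n}c_k(\mathbf{x})x_n^k$. (1) If $c_{d_n}$ does not vanish at any point of $S$, then $P$ is projectively delineable on $S$ if and only if $P$ is delineable on $S$. (2) If $S$ is connected, $c_{d_n}$ vanishes identically on $S$, and $P$ is projectively delineable on $S$, then $P$ is delineable on $S$.
   Context: Write $\mathbf{x}=(x_1,\dots,x_{n-1})$; $E_{\mathbf{x}_0}P$ is the univariate polynomial in $x_n$ obtained by substituting $\mathbf{x}_0$ for $\mathbf{x}$. $\mathbb{RP}^1$ is the quotient of $\mathbb{R}^2\setminus\{(0,0)\}$ by proportionality with the quotient topology; $(u:v)$ is the class of $(u,v)$; $\infty=(1:0)$. With $d=\deg_{x_n}P$, $H^d(P)(\mathbf{x},x_n,y)=\sum_kc_k(\mathbf{x})x_n^ky^{d-k}$. A projective root of a binary form $g(u,v)$ is $(u_0:v_0)$ with $g(u_0,v_0)=0$, with multiplicity (for $g\ne0$) the largest $m$ such that $(v_0u-u_0v)^m$ divides $g$; projective roots of $E_{\mathbf{x}}P$ w.r.t. $d$ are those of $E_{\mathbf{x}}H^d(P)$. $Z_{\mathbb{R}}(P,S)=\{(\mathbf{x},x_n)\in S\times\mathbb{R}:P(\mathbf{x},x_n)=0\}$, $Z_{\mathbb{RP}^1}(P,S)=\{(\mathbf{x},(x_n:y))\in S\times\mathbb{RP}^1:H^d(P)(\mathbf{x},x_n,y)=0\}$. $P$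 is delineable on $S$ if there are $k\in\mathbb{N}$ and continuous $\theta_1,\dots,\theta_k:S\to\mathbb{R}$ with $Z_{\mathbb{R}}(P,S)$ the disjoint union of their graphs and, for each $l$, an $m_l\ge1$ such that $\theta_l(\mathbf{x})$ is a root of $E_{\mathbf{x}}P$ of multiplicity $m_l$ for all $\mathbf{x}\in S$. $P$ is projectively delineable on $S$ if there are $k\in\mathbb{N}$ and continuous $\theta_1,\dots,\theta_k:S\to\mathbb{RP}^1$ with $Z_{\mathbb{RP}^1}(P,S)$ the disjoint union of their graphs and, for each $l$, an $m_l\ge1$ such that $\theta_l(\mathbf{x})$ is a projective root of $E_{\mathbf{x}}P$ (w.r.t. $d$) of multiplicity $m_l$ for all $\mathbf{x}\in S$. *)

(* Defs.v *)
From HB Require Import structures.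
From mathcomp Require Import all_boot all_order all_algebra.
From mathcomp Require Import all_classical all_reals all_analysis.
From mathcomp Require mpoly.
Import (canonicals, coercions, hints) mpoly.

Set Implicit Arguments.
Unset Strict Implicit.
Unset Printing Implicit Defensive.

Import Order.TTheory GRing.Theory Num.Theory.
Import numFieldNormedType.Exports.
Local Open Scope classical_set_scope.
Local Open Scope ring_scope.

Section Defs.
Variables (R : realType) (m : nat).
(* m = n - 1 : the variables x = (x_1,...,x_m) live in 'rV[R]_m ;
   P is a polynomial in x_n with coefficients in R[x_1,...,x_m]. *)

Local Notation mpolyR := (mpoly.mpoly m R).

Definition Eval (x : 'rV[R]_m) (P : {poly mpolyR}) : {poly R} :=
  map_poly (mpoly.meval (fun i => x ord0 i)) P.

Definition cval (x : 'rV[R]_m) (c : mpolyR) : R := mpoly.meval (fun i => x ord0 i) c.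

Definition degn (P : {poly mpolyR}) : nat := (size P).-1.

Definition root_mult (p : {poly R}) (t : R) (mu : nat) : Prop :=
  p != 0 /\ (('X - t%:P) ^+ mu %| p) /\ ~~ (('X - t%:P) ^+ mu.+1 %| p).

Definition ZR (P : {poly mpolyR}) (S : set 'rV[R]_m) : set ('rV[R]_m * R) :=
  [set xt | S xt.1 /\ (Eval xt.1 P).[xt.2] = 0].

Definition delineable (P : {poly mpolyR}) (S : set 'rV[R]_m) : Prop :=
  exists (k : nat) (theta : 'I_k -> 'rV[R]_m -> R) (mu : 'I_k -> nat),
    (forall l, {within S, continuous (theta l)}) /\
    ZR P S = [set xt | exists l, S xt.1 /\ xt.2 = theta l xt.1] /\
    (forall l l' x, l != l' -> S x -> theta l x != theta l' x) /\
    (forall l, (1 <= mu l)%N /\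
       forall x, S x -> root_mult (Eval x P) (theta l x) (mu l)).

(* a point of RP^1 is an equivalence class of a nonzero pair under proportionality *)
Definition pclass (p : R * R) : set (R * R) :=
  [set q | q != (0, 0) /\ exists t : R, t != 0 /\ q = (t * p.1, t * p.2)].

Definition is_rp1 (c : set (R * R)) : Prop :=
  exists p : R * R, p != (0, 0) /\ c = pclass p.

(* quotient topology: a set U of points of RP^1 is open iff its preimage
   under the projection R^2 \ {0} -> RP^1 is open in R^2 \ {0}
   (equivalently in R^2, as R^2 \ {0} is open in R^2) *)
Definition open_rp1 (U : set (set (R * R))) : Prop :=
  open [set p : R * R | p != (0, 0) /\ U (pclass p)].

Definition continuous_rp1 (S : set 'rV[R]_m) (theta : 'rV[R]_m -> set (R * R)) : Prop :=
  forall U, open_rp1 U ->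
    exists V : set 'rV[R]_m, open V /\ S `&` (theta @^-1` U) = S `&` V.

(* binary forms as polynomials in u ('X, outer) with coefficients in R[v] *)
Definition bvar_u : {poly {poly R}} := 'X.
Definition bvar_v : {poly {poly R}} := ('X : {poly R})%:P.

Definition homog (d : nat) (p : {poly R}) : {poly {poly R}} :=
  \sum_(k < d.+1) (p`_k)%:P%:P * bvar_u ^+ k * bvar_v ^+ (d - k).

Definition beval (g : {poly {poly R}}) (p : R * R) : R := (g.[p.1%:P]).[p.2].

Definition bform_mult (g : {poly {poly R}}) (p : R * R) (mu : nat) : Prop :=
  let L := p.2%:P%:P * bvar_u - p.1%:P%:P * bvar_v in
  g != 0 /\ (exists h, g = h * L ^+ mu) /\ ~ (exists h, g = h * L ^+ mu.+1).

Definition HdP (P : {poly mpolyR}) (x : 'rV[R]_m) : {poly {poly R}} :=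
  homog (degn P) (Eval x P).

Definition proj_root_mult (P : {poly mpolyR}) (x : 'rV[R]_m) (c : set (R * R)) (mu : nat) : Prop :=
  exists p : R * R, p != (0, 0) /\ c = pclass p /\
    beval (HdP P x) p = 0 /\ bform_mult (HdP P x) p mu.

Definition ZRP1 (P : {poly mpolyR}) (S : set 'rV[R]_m) : set ('rV[R]_m * set (R * R)) :=
  [set xc | S xc.1 /\ exists p : R * R, p != (0, 0) /\ xc.2 = pclass p /\
                                        beval (HdP P xc.1) p = 0].

Definition proj_delineable (P : {poly mpolyR}) (S : set 'rV[R]_m) : Prop :=
  exists (k : nat) (theta : 'I_k -> 'rV[R]_m -> set (R * R)) (mu : 'I_k -> nat),
    (forall l x, S x -> is_rp1 (theta l x)) /\
    (forall l, continuous_rp1 S (theta l)) /\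
    ZRP1 P S = [set xc | exists l, S xc.1 /\ xc.2 = theta l xc.1] /\
    (forall l l' x, l != l' -> S x -> theta l x <> theta l' x) /\
    (forall l, (1 <= mu l)%N /\
       forall x, S x -> proj_root_mult P x (theta l x) (mu l)).

End Defs.

(* Main.v *)
Require Import Defs.
From HB Require Import structures.
From mathcomp Require Import all_boot all_order all_algebra.
From mathcomp Require Import all_classical all_reals all_analysis.
From mathcomp Require mpoly.
Import (canonicals, coercions, hints) mpoly.
Import Order.TTheory GRing.Theory Num.Theory.
Import numFieldNormedType.Exports.
Local Open Scope classical_set_scope.
Local Open Scope ring_scope.
From mathcomp Require Import ring lra zify.
Section Proj.
Variable R : realType.

Lemma pclass_mem (p : R * R) : p != (0,0) -> pclass p p.
Proof. by move=> p0; split => //; exists 1; rewrite oner_eq0 !mul1r; case: p {p0}. Qed.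

Lemma pclass_eqE (p q : R * R) : q != (0,0) -> pclass p = pclass q ->
  exists t : R, t != 0 /\ q = (t * p.1, t * p.2).
Proof. by move=> q0 e; have := pclass_mem _ q0; rewrite -e => -[_]. Qed.

Lemma pclass_scale (p : R * R) (t : R) : t != 0 ->
  pclass (t * p.1, t * p.2) = pclass p.
Proof.
move=> t0; rewrite /pclass; apply/seteqP; split => q /= [q0 [s [s0 qE]]]; split => //; rewrite qE.
  exists (s * t); split; first by rewrite mulf_neq0.
  by rewrite !mulrA.
exists (s / t); split; first by rewrite mulf_neq0 ?invr_eq0.
by rewrite !mulrA !divfK.
Qed.

Lemma pclass_fin (p : R * R) : p.2 != 0 -> pclass p = pclass (p.1 / p.2, 1).
Proof.
move=> p2; rewrite -(pclass_scale (p.1 / p.2, 1) _ p2) /= mulr1 mulrC divfK //.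
Qed.

Lemma pclass_fin_inj (a b : R) : pclass (a, 1) = pclass (b, 1) -> a = b.
Proof.
move=> e; have [|t [_ [h1 h2]]] := pclass_eqE _ _ _ e.
  by rewrite xpair_eqE oner_eq0 andbF.
by move: h1 h2 => /= -> ; rewrite mulr1 => <-; rewrite mul1r.
Qed.

Lemma pclass_inf (p : R * R) : p != (0,0) -> p.2 = 0 -> pclass p = pclass (1, 0).
Proof.
case: p => u v /= p0 v0; subst v.
have u0 : u != 0 by apply: contra p0 => /eqP ->.
by rewrite -(pclass_scale (1,0) _ u0) /= mulr1 mulr0.
Qed.

Lemma pclass_fin_neq_inf (a : R) : pclass (a, 1) <> pclass (1, 0).
Proof.
move=> e; have [|t [_ [_ h]]] := pclass_eqE _ _ _ (esym e).
  by rewrite xpair_eqE oner_eq0 andbF.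
by move: h; rewrite /= mulr0 => /eqP; rewrite oner_eq0.
Qed.

Lemma pclass_is_inf (p : R * R) : p != (0,0) -> pclass p = pclass (1,0) -> p.2 = 0.
Proof.
move=> p0 e; have [t [_ ->]] := pclass_eqE _ _ p0 (esym e).
by rewrite /= mulr0.
Qed.

End Proj.
Section Homog.
Variable R : realType.
Local Notation U := (bvar_u R).
Local Notation V := (bvar_v R).

Lemma homogE (d : nat) (p : {poly R}) :
  homog d p = \poly_(k < d.+1) (p`_k *: 'X^(d - k)).
Proof.
rewrite /homog poly_def; apply: eq_bigr => k _.
rewrite /bvar_u /bvar_v -rmorphXn /= mulrAC -polyCM.
by rewrite -!mul_polyC.
Qed.

Lemma homog_coef (d : nat) (p : {poly R}) k :
  (homog d p)`_k = if (k <= d)%N then p`_k *: 'X^(d - k) else 0.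
Proof. by rewrite homogE coef_poly ltnS. Qed.

End Homog.
Section Homog2.
Variable R : realType.
Local Notation U := (bvar_u R).
Local Notation V := (bvar_v R).

Lemma homog_mulX (e : nat) (t : R) (q : {poly R}) : (size q <= e.+1)%N ->
  homog e.+1 (('X - t%:P) * q) = (U - t%:P%:P * V) * homog e q.
Proof.
move=> sq; apply/polyP => k.
have tV : t%:P%:P * V = (t%:P * 'X)%:P by rewrite /bvar_v polyCM.
rewrite tV homog_coef !mulrBl !coefB !coefCM /bvar_u !coefXM !homog_coef.
case: k => [|j].
  rewrite /= !subn0 -!mul_polyC polyCB polyCM exprS; ring.
rewrite /= subSS.
have [lt_je|gt_je|/eqP eq_je] := ltngtP j e.
- rewrite ltnS (ltnW lt_je) -!mul_polyC polyCB polyCM -(subnSK lt_je) exprS.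
  ring.
- by rewrite ltnS leqNgt gt_je /= mulr0 subr0.
- move: eq_je => /eqP ->; rewrite ltnS leqnn subnn (nth_default 0 sq) mulr0 subr0 mulr0 subr0.
  by [].
Qed.

Lemma homog_mulXn (e mu : nat) (t : R) (q : {poly R}) : (size q <= e.+1)%N ->
  homog (e + mu) (('X - t%:P) ^+ mu * q) = (U - t%:P%:P * V) ^+ mu * homog e q.
Proof.
move=> sq; elim: mu => [|mu IH]; first by rewrite addn0 !expr0 !mul1r.
rewrite addnS !exprS -!mulrA homog_mulX ?IH //.
apply: (leq_trans (size_polyMleq _ _)); rewrite size_exp_XsubC.
move: sq; case: (size q) => [|s] /=; rewrite ?addn0 //; lia.
Qed.

Definition dh (g : {poly {poly R}}) : {poly R} := map_poly (horner_eval (1:R)) g.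

Lemma dh_homog (d : nat) (p : {poly R}) : (size p <= d.+1)%N -> dh (homog d p) = p.
Proof.
move=> sp; apply/polyP => k; rewrite /dh coef_map homog_coef /=.
case: ifP => kd; first by rewrite horner_evalE hornerZ hornerXn expr1n mulr1.
by rewrite horner_evalE horner0 nth_default //; apply: leq_trans sp _; rewrite ltnNge kd.
Qed.

Lemma dhM (g h : {poly {poly R}}) : dh (g * h) = dh g * dh h.
Proof. by rewrite /dh rmorphM. Qed.

Lemma dhX (g : {poly {poly R}}) n : dh (g ^+ n) = dh g ^+ n.
Proof. by rewrite /dh rmorphXn. Qed.

Lemma dhL (t : R) : dh (U - t%:P%:P * V) = 'X - t%:P.
Proof.
rewrite /dh rmorphB rmorphM /= /bvar_u /bvar_v !map_polyX !map_polyC /=.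
by rewrite !horner_evalE hornerC hornerX mulr1.
Qed.

Lemma homog0 d : homog d (0 : {poly R}) = 0.
Proof. apply/polyP => k; rewrite homog_coef !coef0. by case: ifP; rewrite ?scale0r. Qed.

Lemma homog_eq0 (d : nat) (p : {poly R}) : (size p <= d.+1)%N ->
  (homog d p == 0) = (p == 0).
Proof.
move=> sp; apply/eqP/eqP => [h|->]; last exact: homog0.
by rewrite -(dh_homog _ _ sp) h /dh map_poly0.
Qed.

Lemma homog_dvd (d : nat) (p : {poly R}) (t : R) (mu : nat) :
  p != 0 -> (size p <= d.+1)%N ->
  ((exists h, homog d p = h * (U - t%:P%:P * V) ^+ mu) <-> (('X - t%:P) ^+ mu %| p)).
Proof.
move=> p0 sp; split.
  case=> h eh; have := dh_homog _ _ sp; rewrite eh dhM dhX dhL => <-.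
  exact: dvdp_mull.
case/dvdpP => q eq.
have q0 : q != 0 by apply: contra p0 => /eqP q0; rewrite eq q0 mul0r.
have sq : size p = (size q + mu)%N.
  rewrite eq size_mul ?expf_neq0 ?polyXsubC_eq0 // size_exp_XsubC.
  by rewrite addnS.
have sq0 : (0 < size q)%N by rewrite size_poly_gt0.
have sq1 : (size q <= (d - mu).+1)%N by move: sp; rewrite sq; lia.
have dmu : d = (d - mu + mu)%N by move: sp; rewrite sq; lia.
exists (homog (d - mu) q); rewrite eq mulrC dmu homog_mulXn // mulrC.
by rewrite -dmu.
Qed.
End Homog2.
Section Bf.
Variable R : realType.
Local Notation U := (bvar_u R).
Local Notation V := (bvar_v R).

Lemma beval_homog (d : nat) (p : {poly R}) (u v : R) :
  beval (homog d p) (u, v) = \sum_(k < d.+1) p`_k * u ^+ k * v ^+ (d - k).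
Proof.
rewrite /beval /homog /= horner_sum horner_sum; apply: eq_bigr => k _.
by rewrite /bvar_u /bvar_v !hornerE.
Qed.

Lemma beval_fin (d : nat) (p : {poly R}) (u v : R) : v != 0 -> (size p <= d.+1)%N ->
  beval (homog d p) (u, v) = v ^+ d * p.[u / v].
Proof.
move=> v0 sp; rewrite beval_homog (horner_coef_wide _ sp) mulr_sumr.
apply: eq_bigr => [[k /= kd]] _.
have -> : v ^+ d = v ^+ (d - k) * v ^+ k by rewrite -exprD subnK // -ltnS.
rewrite expr_div_n; have vk : v ^+ k != 0 by rewrite expf_neq0.
by field.
Qed.

Lemma beval_inf (d : nat) (p : {poly R}) (u : R) :
  beval (homog d p) (u, 0) = p`_d * u ^+ d.
Proof.
rewrite beval_homog big_ord_recr /= subnn expr0 mulr1 big1 ?add0r //.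
move=> [k /= kd] _; rewrite expr0n /=.
have -> : (d - k == 0)%N = false by apply/negbTE; rewrite subn_eq0 -ltnNge. by rewrite mulr0.
Qed.

Lemma bform_fin (g : {poly {poly R}}) (u v : R) (mu : nat) : v != 0 ->
  bform_mult g (u, v) mu <->
  (g != 0 /\ (exists h, g = h * (U - (u / v)%:P%:P * V) ^+ mu) /\ ~ (exists h, g = h * (U - (u / v)%:P%:P * V) ^+ mu.+1)).
Proof.
move=> v0; rewrite /bform_mult /=.
have eL : v%:P%:P * U - u%:P%:P * V = v%:P%:P * (U - (u / v)%:P%:P * V).
  by rewrite mulrBr mulrA -!polyCM mulrCA divff // mulr1.
rewrite eL.
have ex : forall n, (exists h, g = h * (v%:P%:P * (U - (u / v)%:P%:P * V)) ^+ n) <->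
   (exists h, g = h * (U - (u / v)%:P%:P * V) ^+ n).
  move=> n; split => -[h ->].
    by exists (h * (v%:P%:P) ^+ n); rewrite exprMn mulrA.
  exists (h * ((v^-1)%:P%:P) ^+ n); rewrite exprMn mulrA -[h * _ * _]mulrA.
  by rewrite -exprMn -!polyCM mulVf // expr1n mulr1.
by rewrite (ex mu) (ex mu.+1).
Qed.

Lemma bform_root (d : nat) (p : {poly R}) (u v : R) (mu : nat) :
  v != 0 -> (size p <= d.+1)%N ->
  (bform_mult (homog d p) (u, v) mu <-> root_mult p (u / v) mu).
Proof.
move=> v0 sp; rewrite bform_fin // /root_mult homog_eq0 //.
split=> -[p0 [h1 h2]]; split => //; split.
- exact: ((homog_dvd R d p (u/v) mu p0 sp).1 h1).
- by apply/negP => /(homog_dvd R d p (u/v) mu.+1 p0 sp).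
- exact: ((homog_dvd R d p (u/v) mu p0 sp).2 h1).
- by move=> /(homog_dvd R d p (u/v) mu.+1 p0 sp) h; rewrite h in h2.
Qed.

End Bf.
Section Topo.
Variable R : realType.

Lemma within_open {T Y : topologicalType} (S : set T) (f : T -> Y) :
  {within S, continuous f} <->
  (forall W, open W -> exists V, open V /\ S `&` f @^-1` W = S `&` V).
Proof.
split.
  move=> /continuousP cf W oW; have /open_subspaceP [V oV e] := cf W oW.
  by exists V; split => //; rewrite setIC -e setIC.
move=> H; apply/continuousP => W oW; apply/open_subspaceP.
have [V [oV e]] := H W oW; exists V => //.
by rewrite setIC -e setIC.
Qed.

Lemma open_aff (W : set R) : open W -> open [set p : R * R | p.2 != 0 /\ W (p.1 / p.2)].
Proof.
move=> oW; rewrite openE => p [p2 Wp].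
have c : {for p, continuous (fun q : R * R => q.1 / q.2)}.
  apply: continuousM; first exact: cvg_fst.
  by apply: continuousV => //; exact: cvg_snd.
have h1 : nbhs p [set q : R * R | W (q.1 / q.2)].
  by apply: c; apply: open_nbhs_nbhs; split.
have h2 : nbhs p [set q : R * R | q.2 != 0].
  apply: (@cvg_snd _ _ (nbhs p.1) (nbhs p.2) _ [set x : R | x != 0]).
  apply: open_nbhs_nbhs; split => //; exact: open_neq.
rewrite /interior; apply: filterS (filterI h1 h2) => q [Wq q2]; by split.
Qed.

End Topo.
Section Main.
Variables (R : realType) (m : nat) (S : set 'rV[R]_m) (P : {poly mpoly.mpoly m R}).

Lemma size_Eval x : (size (Eval x P) <= (degn P).+1)%N.
Proof.
rewrite /degn /Eval map_polyE; apply: leq_trans (size_Poly _) _; rewrite size_map.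
by case: (size P).
Qed.

Lemma coef_Eval_d x : (Eval x P)`_(degn P) = cval x (lead_coef P).
Proof. by rewrite /Eval coef_map /= lead_coefE. Qed.

Lemma root_fin x u v : v != 0 ->
  (beval (HdP P x) (u, v) = 0 <-> (Eval x P).[u / v] = 0).
Proof.
move=> v0; rewrite /HdP beval_fin ?size_Eval //; split; last by move->; rewrite mulr0.
by move/eqP; rewrite mulf_eq0 expf_eq0 (negbTE v0) andbF /= => /eqP.
Qed.

Lemma inf_not_root x (p : R * R) : cval x (lead_coef P) != 0 -> p != (0,0) -> p.2 = 0 ->
  beval (HdP P x) p <> 0.
Proof.
case: p => u v /= c0 p0 v0; subst v.
have u0 : u != 0 by apply: contra p0 => /eqP ->.
by rewrite /HdP beval_inf coef_Eval_d => /eqP; rewrite mulf_eq0 expf_eq0 (negbTE c0) (negbTE u0) andbF.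
Qed.

Lemma root_inf x : cval x (lead_coef P) = 0 -> beval (HdP P x) (1, 0) = 0.
Proof. by move=> c0; rewrite /HdP beval_inf coef_Eval_d c0 mul0r. Qed.


Definition Uch (W : set R) : set (set (R * R)) :=
  [set c | exists t, W t /\ c = pclass (t, 1)].

Lemma open_Uch W : open W -> open_rp1 (Uch W).
Proof.
move=> oW; rewrite /open_rp1.
suff -> : [set p : R * R | p != (0, 0) /\ Uch W (pclass p)] =
          [set p : R * R | p.2 != 0 /\ W (p.1 / p.2)] by exact: open_aff.
apply/seteqP; split => -[u v] /=.
  move=> [p0 [t [Wt e]]].
  have [s [s0 [-> ->]]] := pclass_eqE _ _ _ p0 (esym e).
  by rewrite /= mulr1 s0 mulrC mulKf.
move=> [v0 Wp]; split; first by apply: contra v0 => /eqP [_ ->].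
by exists (u / v); split => //; rewrite (pclass_fin _ (u, v)).
Qed.

Lemma rp1_to_real (theta : 'rV[R]_m -> set (R * R)) (f : 'rV[R]_m -> R) :
  continuous_rp1 S theta -> (forall x, S x -> theta x = pclass (f x, 1)) ->
  {within S, continuous f}.
Proof.
move=> ct ef; apply/within_open => W oW.
have [V [oV e]] := ct _ (open_Uch _ oW); exists V; split => //.
rewrite -e; apply/seteqP; split => x [Sx] /=; rewrite ef //.
  by move=> Wf; split => //; exists (f x).
by case=> t [Wt /pclass_fin_inj ->].
Qed.

Lemma real_to_rp1 (f : 'rV[R]_m -> R) :
  {within S, continuous f} -> continuous_rp1 S (fun x => pclass (f x, 1)).
Proof.
move=> /within_open cf U oU.
have ctp : continuous (fun t : R => (t, 1 : R)).
  move=> t; apply: (@cvg_pair _ _ _ (nbhs t) (nbhs t) (nbhs (1:R))) => //; exact: cvg_cst.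
have oW : open [set t : R | U (pclass (t, 1))].
  have := (proj1 (continuousP _) ctp) _ oU.
  suff -> : (fun t : R => (t, 1 : R)) @^-1` [set p : R * R | p != (0, 0) /\ U (pclass p)] =
            [set t : R | U (pclass (t, 1))] by [].
  apply/seteqP; split => t /=; first by case.
  by move=> Ut; split => //; rewrite xpair_eqE oner_eq0 andbF.
have [V [oV e]] := cf _ oW; exists V; split => //.
Qed.


Definition aff (c : set (R * R)) : R := xget 0 [set t | c = pclass (t, 1)].

Lemma aff_spec (p : R * R) : p.2 != 0 -> pclass p = pclass (aff (pclass p), 1).
Proof.
move=> p2; have := @xgetPex _ 0 [set t | pclass p = pclass (t, 1)].
by apply; exists (p.1 / p.2); exact: pclass_fin.
Qed.

Lemma fin_sections (k : nat) (theta : 'I_k -> 'rV[R]_m -> set (R * R)) (mu : 'I_k -> nat) :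
  (forall l, continuous_rp1 S (theta l)) ->
  (forall l l' x, l != l' -> S x -> theta l x <> theta l' x) ->
  (forall l, (1 <= mu l)%N /\ forall x, S x -> proj_root_mult P x (theta l x) (mu l)) ->
  (forall l x, S x -> theta l x <> pclass (1, 0)) ->
  (forall x t, S x -> (Eval x P).[t] = 0 -> exists l, theta l x = pclass (t, 1)) ->
  delineable P S.
Proof.
move=> ct dist mult ninf cov.
have Hrep : forall l x, S x -> theta l x = pclass (aff (theta l x), 1).
  move=> l x Sx; have [_ /(_ x Sx) [p [p0 [e _]]]] := mult l.
  have p2 : p.2 != 0.
    by apply/eqP => p20; apply: (ninf l x Sx); rewrite e; exact: pclass_inf.
  by rewrite e; exact: aff_spec.
have Hroot : forall l x, S x -> (Eval x P).[aff (theta l x)] = 0 /\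
    root_mult (Eval x P) (aff (theta l x)) (mu l).
  move=> l x Sx; have [_ /(_ x Sx) [p [p0 [e [hb hm]]]]] := mult l.
  have p2 : p.2 != 0.
    by apply/eqP => p20; apply: (ninf l x Sx); rewrite e; exact: pclass_inf.
  have ea : aff (theta l x) = p.1 / p.2.
    apply: pclass_fin_inj; rewrite -Hrep // e; exact: pclass_fin.
  rewrite ea; split; first by move: hb; case: p {p0 e ea hm} p2 => u v /= p2 /(root_fin _ _ _ p2).
  move: hm; rewrite /HdP; case: p {p0 e ea hb} p2 => u v /= p2.
  by move/(bform_root _ _ _ _ _ _ p2 (size_Eval x)).
exists k, (fun l x => aff (theta l x)), mu; split; last split; last split.
- by move=> l; apply: (rp1_to_real (theta l)) => // x Sx; exact: Hrep.
- apply/seteqP; split => -[x t] /=.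
    move=> [Sx Et]; have [l el] := cov x t Sx Et; exists l; split => //.
    by apply: pclass_fin_inj; rewrite -el -Hrep.
  by move=> [l [Sx ->]]; split => //; case: (Hroot l x Sx).
- move=> l l' x ll' Sx; apply/eqP => ea; apply: (dist l l' x ll' Sx).
  by rewrite (Hrep l x Sx) (Hrep l' x Sx) ea.
- move=> l; split; first by case: (mult l).
  by move=> x Sx; case: (Hroot l x Sx).
Qed.


Lemma real_to_proj : (forall x, S x -> cval x (lead_coef P) != 0) ->
  delineable P S -> proj_delineable P S.
Proof.
move=> lc [k [theta [mu [ct [ZRe [dist mult]]]]]].
have n10 : forall t : R, (t, 1) != (0, 0) :> R * R by move=> t; rewrite xpair_eqE oner_eq0 andbF.
have rootl : forall l x, S x -> (Eval x P).[theta l x] = 0.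
  move=> l x Sx; have [] // : ZR P S (x, theta l x) by rewrite ZRe; exists l.
have bl : forall l x, S x -> beval (HdP P x) (theta l x, 1) = 0.
  by move=> l x Sx; apply/(root_fin _ _ _ (oner_neq0 R)); rewrite divr1; exact: rootl.
exists k, (fun l x => pclass (theta l x, 1)), mu; split; last split; last split; last split.
- by move=> l x Sx; exists (theta l x, 1).
- by move=> l; exact: real_to_rp1.
- apply/seteqP; split => -[x c] /=.
    move=> [Sx [p [p0 [/= -> hb]]]].
    have p2 : p.2 != 0 by apply/eqP => p20; exact: (inf_not_root _ _ (lc x Sx) p0 p20).
    have : ZR P S (x, p.1 / p.2).
      by split => //=; move: hb; case: p {p0} p2 => u v /= p2 /(root_fin _ _ _ p2).
    rewrite ZRe => -[l [_ /= el]]; exists l; split => //.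
    by rewrite -el; exact: pclass_fin.
  by move=> [l [Sx ->]]; split => //; exists (theta l x, 1); split => //; split => //; exact: bl.
- move=> l l' x ll' Sx /pclass_fin_inj e.
  by have := dist l l' x ll' Sx; rewrite e eqxx.
- move=> l; have [m1 hm] := mult l; split => // x Sx.
  exists (theta l x, 1); split => //; split => //; split; first exact: bl.
  rewrite /HdP; apply/(bform_root _ _ _ _ _ _ (oner_neq0 R) (size_Eval x)).
  by rewrite divr1; exact: hm.
Qed.

Lemma proj_to_real1 : (forall x, S x -> cval x (lead_coef P) != 0) ->
  proj_delineable P S -> delineable P S.
Proof.
move=> lc [k [theta [mu [rp [ct [ZRe [dist mult]]]]]]].
apply: (@fin_sections k theta mu ct dist mult).
  move=> l x Sx e; have [_ /(_ x Sx) [p [p0 [ep [hb _]]]]] := mult l.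
  apply: (inf_not_root _ _ (lc x Sx) p0 _ hb).
  by apply: pclass_is_inf => //; rewrite -ep.
move=> x t Sx Et.
have : ZRP1 P S (x, pclass (t, 1)).
  split => //; exists (t, 1); split; first by rewrite xpair_eqE oner_eq0 andbF.
  by split => //; apply/(root_fin _ _ _ (oner_neq0 R)); rewrite divr1.
by rewrite ZRe => -[l [_ /= e]]; exists l.
Qed.


Lemma delineable_empty : delineable P set0.
Proof.
exists 0%N, (fun _ _ => 0), (fun _ => 1%N); split; last split; last split.
- by case.
- by apply/seteqP; split => -[x t] /= [] [].
- by case.
- by case.
Qed.

Lemma open_Ufin : open_rp1 [set c : set (R * R) | c <> pclass (1, 0)].
Proof.
rewrite /open_rp1.
suff -> : [set p : R * R | p != (0, 0) /\ [set c : set (R * R) | c <> pclass (1, 0)] (pclass p)] =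
          [set p : R * R | p.2 != 0 /\ [set: R] (p.1 / p.2)] by exact: open_aff openT.
apply/seteqP; split => p /=.
  move=> [p0 ninf]; split => //; apply/eqP => p2; apply: ninf.
  exact: pclass_inf.
move=> [p2 _]; split; first by apply: contra p2 => /eqP ->.
rewrite (pclass_fin _ p p2); exact: pclass_fin_neq_inf.
Qed.

End Main.

Section Part2.
Variables (R : realType) (m : nat) (S : set 'rV[R]_m) (P : {poly mpoly.mpoly m R}).

Lemma proj_to_real2 : connected S -> (forall x, S x -> cval x (lead_coef P) = 0) ->
  proj_delineable P S -> delineable P S.
Proof.
move=> cS lc [k [theta [mu [rp [ct [ZRe [dist mult]]]]]]].
have [->|/set0P [x0 Sx0]] := eqVneq S set0; first exact: delineable_empty.
have n10 : (1, 0) != (0, 0) :> R * R by rewrite xpair_eqE oner_eq0.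
have inf_root : forall x, S x -> exists l, theta l x = pclass (1, 0).
  move=> x Sx; have : ZRP1 P S (x, pclass (1, 0)).
    split => //; exists (1, 0); split => //; split => //; apply: root_inf; exact: lc.
  by rewrite ZRe => -[l [_ /= e]]; exists l.
have [l0 e0] := inf_root x0 Sx0.
have /choice [V hV] : forall l, exists V : set 'rV[R]_m, open V /\
    S `&` theta l @^-1` [set c : set (R * R) | c <> pclass (1, 0)] = S `&` V.
  by move=> l; exact: ct l _ (open_Ufin R).
have inV : forall l x, S x -> (V l x <-> theta l x <> pclass (1, 0)).
  move=> l x Sx; have [_ e] := hV l; split.
    by move=> Vx; have : (S `&` V l) x by []; rewrite -e => -[].
  by move=> nx; have : (S `&` theta l @^-1` [set c | c <> pclass (1, 0)]) x by []; rewrite e => -[].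
have memA : forall x, S x -> (theta l0 x = pclass (1, 0) <-> forall l, l != l0 -> V l x).
  move=> x Sx; split.
    move=> e l ll0; apply/(inV l x Sx) => el.
    by apply: (dist l l0 x ll0 Sx); rewrite el e.
  move=> H; have [l el] := inf_root x Sx.
  have [ll0|ll0] := eqVneq l l0; first by rewrite -ll0.
  by have := (inV l x Sx).1 (H l ll0).
have AS : [set x | S x /\ theta l0 x = pclass (1, 0)] = S.
  apply: cS.
  - by exists x0.
  - exists (~` \bigcup_(l in [set l | l != l0]) ~` V l).
      apply: closed_openC; apply: closed_bigcup; first exact: finite_finset.
      by move=> l _; apply: open_closedC; case: (hV l).
    apply/seteqP; split => x /=.
      move=> [Sx e]; split => // -[l /= ll0]; apply; exact: (memA x Sx).1.
    move=> [Sx H]; split => //; apply/(memA x Sx) => l ll0.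
    by apply: contrapT => nV; apply: H; exists l.
  - exists (~` V l0); first by apply: open_closedC; case: (hV l0).
    apply/seteqP; split => x /=.
      by move=> [Sx e]; split => //; move/(inV l0 x Sx).
    move=> [Sx nV]; split => //; apply: contrapT => ne.
    by apply: nV; apply/(inV l0 x Sx).
have inf0 : forall x, S x -> theta l0 x = pclass (1, 0).
  by move=> x; rewrite -{1}AS => -[].
apply: (@fin_sections R m S P k.-1 (fun j => theta (lift l0 j)) (fun j => mu (lift l0 j))).
- by move=> j; exact: ct.
- by move=> j j' x jj' Sx; apply: dist => //; rewrite (inj_eq (@lift_inj _ l0)).
- by move=> j; exact: mult.
- move=> j x Sx e; apply: (dist (lift l0 j) l0 x _ Sx); first by rewrite eq_sym neq_lift.
  by rewrite e inf0.
- move=> x t Sx Et.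
  have : ZRP1 P S (x, pclass (t, 1)).
    split => //; exists (t, 1); split; first by rewrite xpair_eqE oner_eq0 andbF.
    by split => //; apply/(root_fin _ _ _ _ _ _ (oner_neq0 R)); rewrite divr1.
  rewrite ZRe => -[l [_ /= e]].
  case: (unliftP l0 l) => [j el|el]; first by exists j; rewrite e el.
  by have := pclass_fin_neq_inf R t; rewrite e el inf0.
Qed.

End Part2.

Theorem mainTheorem6 (R : realType) (m : nat) (S : set 'rV[R]_m)
  (P : {poly mpoly.mpoly m R}) :
  ((forall x, S x -> cval x (lead_coef P) != 0) ->
     (proj_delineable P S <-> delineable P S)) /\
  (connected S -> (forall x, S x -> cval x (lead_coef P) = 0) ->
     proj_delineable P S -> delineable P S).
Proof.
split.
  by move=> lc; split; [apply: proj_to_real1 | apply: real_to_proj].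
by move=> cS lc; apply: proj_to_real2.
Qed.
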